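(* Let $G$ be a finite group of order $n\ge3$ and $S\subseteq G\setminus\{1\}$ an inverse-closed normal subset such that $\Gamma=\operatorname{Cay}(G,S)$ is connected. Then both $\operatorname{Deg}(\Gamma)$ and $\operatorname{Deg}_D(\Gamma)$ divide $\varphi(n)/2$.
   Context: $S$ normal means $gSg^{-1}=S$ for all $g\in G$. $\operatorname{Cay}(G,S)$ has vertex set $G$ with $u\sim v$ iff $uv^{-1}\in S$. $\operatorname{Deg}(\Gamma)$ (resp. $\operatorname{Deg}_D(\Gamma)$) is the degree over $\mathbb{Q}$ of the smallest subfield of $\mathbb{C}$ containing all eigenvalues of the adjacency matrix (resp. the distance matrix, whose $(u,v)$-entry is the graph distance). $\varphi$ is Euler's totient. *)

(* Defs.v *)
From HB Require Import structures.
From mathcomp Require Import all_boot all_order all_algebra all_fingroup all_field.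
Set Implicit Arguments. Unset Strict Implicit. Unset Printing Implicit Defensive.
Import GRing.Theory Num.Theory.
Local Open Scope ring_scope.

(* Degree over Q of the smallest subfield of C containing all elements of s:
   the Q-dimension of the number field Q(s), realised (via algnum's
   num_field_exists) as a fieldExtType over rat embedded in algC and
   generated by a preimage of s. *)
Definition deg_gen (s : seq algC) : nat :=
  \dim {: projT1 (num_field_exists s)}%VS.

Definition eigs (m : nat) (A : 'M[algC]_m) : seq algC :=
  sval (closed_field_poly_normal (char_poly A)).

Section Cayley.
Variables (gT : finGroupType) (S : {set gT}).

Definition cay_adj : rel gT := fun u v => (u * v^-1)%g \in S.

Fixpoint cay_walk (k : nat) (u v : gT) : bool :=
  if k is k'.+1 then [exists w, cay_adj u w && cay_walk k' w v] else u == v.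

Definition cay_connected : Prop := forall u v : gT, connect cay_adj u v.

(* graph distance: least k with a walk of length k (for a connected graph
   on #|gT| vertices this is < #|gT|). *)
Definition cay_dist (u v : gT) : nat :=
  find (fun k => cay_walk k u v) (iota 0 #|gT|).

Definition vtx (i : 'I_#|gT|) : gT := enum_val i.

Definition cay_adjmx : 'M[algC]_#|gT| :=
  \matrix_(i, j) (if cay_adj (vtx i) (vtx j) then 1 else 0).

Definition cay_distmx : 'M[algC]_#|gT| :=
  \matrix_(i, j) (cay_dist (vtx i) (vtx j))%:R.

Definition Deg : nat := deg_gen (eigs cay_adjmx).
Definition DegD : nat := deg_gen (eigs cay_distmx).
End Cayley.

(* Main.v *)
Require Import Defs.
From HB Require Import structures.
From mathcomp Require Import ring.
From mathcomp Require Import all_boot all_order all_algebra all_fingroup all_field all_solvable all_character.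
Set Implicit Arguments. Unset Strict Implicit. Unset Printing Implicit Defensive.
Import Order.TTheory GRing.Theory Num.Theory.

Section NumFieldDeg.
Local Open Scope ring_scope.
Variables (Qn : fieldExtType rat) (QnC : {rmorphism Qn -> algC}) (F : {subfield Qn}).

Definition inF (c : algC) := exists2 y, y \in F & QnC y = c.

Lemma inF_rat a : inF (ratr a).
Proof.
exists (a%:A); first by rewrite rpredZ ?mem1v.
by rewrite alg_num_field fmorph_rat.
Qed.

Lemma inFD c1 c2 : inF c1 -> inF c2 -> inF (c1 + c2).
Proof. by move=> [y1 F1 <-] [y2 F2 <-]; exists (y1 + y2); rewrite ?rpredD ?rmorphD. Qed.

Lemma inFM c1 c2 : inF c1 -> inF c2 -> inF (c1 * c2).
Proof. by move=> [y1 F1 <-] [y2 F2 <-]; exists (y1 * y2); rewrite ?rpredM ?rmorphM. Qed.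

Lemma inFX c k : inF c -> inF (c ^+ k).
Proof.
move=> Fc; elim: k => [|k IH]; first by rewrite expr0 -(rmorph1 (@ratr algC)); apply: inF_rat.
by rewrite exprS; apply: inFM.
Qed.

Lemma inF_sum (I : Type) (r : seq I) (P : pred I) (G : I -> algC) :
  (forall i, P i -> inF (G i)) -> inF (\sum_(i <- r | P i) G i).
Proof.
move=> HG; apply: (big_ind inF) => //; last exact: inFD.
by rewrite -(rmorph0 (@ratr algC)); apply: inF_rat.
Qed.

Lemma inF_gen (L : fieldExtType rat) (LC : {rmorphism L -> algC}) xs :
  forall (K : {subfield L}),
  (forall v, v \in K -> inF (LC v)) -> (forall x, x \in xs -> inF (LC x)) ->
  forall v, v \in <<K & xs>>%VS -> inF (LC v).
Proof.
elim: xs => [|x xs IH] K HK Hxs v.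
  by rewrite adjoin_nil subfield_closed; apply: HK.
rewrite adjoin_cons => Hv.
apply: (IH <<K; x>>%AS) Hv => [u /Fadjoin_polyP [p Kp ->]|y Hy]; last first.
  by apply: Hxs; rewrite inE Hy orbT.
rewrite horner_coef rmorph_sum; apply: inF_sum => i _.
rewrite rmorphM rmorphXn; apply: inFM; first by apply: HK; apply: (polyOverP Kp).
by apply: inFX; apply: Hxs; rewrite inE eqxx.
Qed.


Lemma deg_gen_dvd s : (forall c, c \in s -> inF c) -> (deg_gen s %| \dim F)%N.
Proof.
move=> Hs; rewrite /deg_gen; case: (num_field_exists s) => Qs [QsC [s1 Ds1 gen]] /=.
have Pall v : inF (QsC v).
  apply: (@inF_gen _ QsC s1 1%AS) => [u /vlineP [a ->]||]; last by rewrite gen memvf.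
    by rewrite alg_num_field fmorph_rat; apply: inF_rat.
  by move=> x Hx; apply: Hs; rewrite -Ds1 map_f.
pose f y := sval (sig2_eqW (Pall y)).
have fF y : f y \in F by rewrite /f; case: (sig2_eqW _).
have fC y : QnC (f y) = QsC y by rewrite /f; case: (sig2_eqW _).
have fa : zmod_morphism f.
  by move=> x y; apply: (fmorph_inj QnC); rewrite !(fC, rmorphB).
have fm : monoid_morphism f.
  split=> [|x y]; apply: (fmorph_inj QnC); rewrite ?fC ?rmorph1 //.
  by rewrite !rmorphM /= !fC.
pose faM := GRing.isZmodMorphism.Build Qs Qn f fa.
pose fmM := GRing.isMonoidMorphism.Build Qs Qn f fm.
pose fRM : {rmorphism _ -> _} := HB.pack f faM fmM.
pose flM := GRing.isScalable.Build rat Qs Qn *:%R f (fmorph_numZ fRM).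
pose fLRM : {lrmorphism _ -> _} := HB.pack f faM fmM flM.
pose fA := AHom (linfun_is_ahom fLRM).
have fAE y : fA y = f y by exact: (lfunE fLRM y).
have ker0 : lker fA == 0%VS.
  by apply/lker0P => x y; rewrite !fAE; apply: (fmorph_inj fRM).
have -> : \dim {:Qs} = \dim (fA @: fullv)%VS.
  by rewrite limg_dim_eq // (eqP ker0) capv0.
rewrite -gen aimg_adjoin_seq aimg1.
apply: field_dimS; apply/Fadjoin_seqP; split; first exact: sub1v.
by move=> _ /mapP [y _ ->]; rewrite fAE fF.
Qed.

End NumFieldDeg.
Section RealSub.
Local Open Scope ring_scope.
Variables (Qn : fieldExtType rat) (QnC : {rmorphism Qn -> algC}) (n : nat) (w : Qn).
Hypotheses (n3 : (2 < n)%N) (prim_w : n.-primitive_root w) (genQn : <<1; w>>%VS = fullv).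

Local Notation pQtoC := (map_poly (@ratr algC)).
Let z := QnC w.
Let prim_z : n.-primitive_root z.
Proof. by rewrite fmorph_primitive_root. Qed.
Let n_gt0 : (0 < n)%N. Proof. by apply: leq_trans n3. Qed.

Lemma z_neq0 : z != 0.
Proof.
apply/eqP => z0; have := prim_expr_order prim_z; rewrite z0 expr0n.
by case: n n_gt0 => //= ? _ /eqP; rewrite eq_sym oner_eq0.
Qed.

Lemma conj_z : z^* = z^-1.
Proof.
have nz1 : `|z| = 1.
  apply/eqP; rewrite -(@pexpr_eq1 _ _ n) // -normrX (prim_expr_order prim_z) normr1 //.
by rewrite invC_norm nz1 expr1n invr1 mul1r.
Qed.

Lemma z_not_real : z^* != z.
Proof.
rewrite conj_z; apply/negP => /eqP zz.
have : z ^+ 2 = 1 by rewrite expr2 -{1}zz mulVf ?z_neq0.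
move/eqP; rewrite -(prim_order_dvd prim_z) => /(dvdn_leq (isT : (0 < 2)%N)); by rewrite leqNgt n3.

Qed.

Let u := w + w^-1.
Definition Fr : {subfield Qn} := <<1; u>>%AS.

Let w_neq0 : w != 0.
Proof. by rewrite -(fmorph_eq0 QnC) z_neq0. Qed.

Let u_real : (QnC u)^* = QnC u.
Proof. by rewrite rmorphD fmorphV /= rmorphD /= fmorphV /= conj_z invrK addrC. Qed.

Lemma Fr_real y : y \in Fr -> (QnC y)^* = QnC y.
Proof.
move=> /Fadjoin_polyP [p Kp ->].
rewrite horner_coef !rmorph_sum; apply: eq_bigr => i _.
have /vlineP [a ->] := polyOverP Kp i.
by rewrite !rmorphM !rmorphXn /= u_real alg_num_field !fmorph_rat.
Qed.

Lemma w_notin : w \notin Fr.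
Proof. by apply/negP => /Fr_real; apply/eqP; apply: z_not_real. Qed.

Lemma adjoin_deg_w : adjoin_degree Fr w = 2%N.
Proof.
pose P : {poly Qn} := 'X^2 - u%:P * 'X + 1.
have PF : P \is a polyOver Fr.
  by rewrite rpredD ?rpredB ?rpredM ?rpredX ?polyOverX ?rpred1 ?polyOverC ?memv_adjoin.
have rP : root P w.
  rewrite /root !hornerE /u mulrDl mulVf //.
  by apply/eqP; ring.
have szP : size P = 3.
  rewrite /P -addrA size_addl ?size_polyXn // (leq_ltn_trans (size_add _ _)) //.
  rewrite gtn_max size_polyN size_polyC oner_neq0 /= andbT.
  by rewrite (leq_ltn_trans (size_mul_leq _ _)) // size_polyX size_polyC; case: (u != 0).
have := minPoly_dvdp PF rP.
have P0 : P != 0 by rewrite -size_poly_eq0 szP.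
move=> /(dvdp_leq P0); rewrite size_minPoly szP ltnS.
move: w_notin; rewrite -adjoin_deg_eq1.
rewrite /adjoin_degree; case: (_.-1) => [|[|[|]]] //.
Qed.


Lemma Frw_full : <<Fr; w>>%VS = fullv.
Proof.
apply/eqP; rewrite eqEsubv subvf /= -genQn.
by apply: adjoinSl; apply: sub1v.
Qed.

Lemma dim_Qn : \dim {:Qn} = totient n.
Proof.
have [r [Dr mon_r] dv_r] := minCpolyP z.
have Sinj_poly (p : {poly rat}) :
    map_poly QnC (map_poly (in_alg Qn) p) = pQtoC p.
  rewrite -map_poly_comp; apply: eq_map_poly => a.
  by rewrite /= rmorphZ_num rmorph1 mulr1.
have szr : size r = (totient n).+1.
  have := size_cyclotomic z n; rewrite -(minCpoly_cyclotomic prim_z) Dr.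
  by rewrite size_map_poly.
have aP i : (minPoly 1 w)`_i \in 1%VS.
  by apply/polyOverP; apply: minPolyOver.
have {aP} a_ i := sig_eqW (vlineP _ _ (aP i)).
pose q := \poly_(i < size (minPoly 1 w)) sval (a_ i).
have Dq : map_poly QnC (minPoly 1 w) = pQtoC q.
  apply/polyP=> i; rewrite !coef_map coef_poly /=.
  case: ifP => [_|/negbT]; last first.
    by rewrite -leqNgt => le; rewrite nth_default // !rmorph0.
  case: (a_ i) => a /= ->.
  by rewrite alg_num_field fmorph_rat.
have m0 : minPoly 1 w != 0 by apply: monic_neq0; apply: monic_minPoly.
have szq : size q = size (minPoly 1 w).
  by rewrite -(size_map_poly (@ratr algC)) -Dq size_map_poly.
have le1 : (size r <= size q)%N.
  apply: dvdp_leq; first by rewrite -size_poly_eq0 szq size_poly_eq0.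
  by rewrite -dv_r -Dq fmorph_root root_minPoly.
have le2 : (size (minPoly 1 w) <= size r)%N.
  have -> : size r = size (map_poly (in_alg Qn) r) by rewrite size_map_poly.
  apply: dvdp_leq.
    by rewrite map_poly_eq0 -size_poly_eq0 szr.
  apply: minPoly_dvdp; first exact: alg_polyOver.
  by rewrite -(fmorph_root QnC) Sinj_poly -Dr root_minCpoly.
rewrite -genQn dim_Fadjoin dimv1 muln1.
apply/eqP; rewrite -eqSS -szr -size_minPoly eqn_leq le2 /=.
by rewrite -szq.
Qed.

Lemma dim_Fr : totient n = (2 * \dim Fr)%N.
Proof. by rewrite -dim_Qn -Frw_full dim_Fadjoin adjoin_deg_w. Qed.

Lemma real_in_Fr y : (QnC y)^* = QnC y -> y \in Fr.
Proof.
move=> yr.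
have yF : y \in <<Fr; w>>%VS by rewrite Frw_full memvf.
set p := Fadjoin_poly Fr w y.
have pF := Fadjoin_polyOver Fr w y.
have szp : (size p <= 2)%N by rewrite -adjoin_deg_w size_Fadjoin_poly.
have Dy : y = p`_0 + p`_1 * w.
  by rewrite -(Fadjoin_poly_eq yF) -/p (horner_coef_wide _ szp) big_ord_recr big_ord1 /= expr0 mulr1 expr1.
have p0 : p`_0 \in Fr := polyOverP pF 0.
have p1 : p`_1 \in Fr := polyOverP pF 1.
suff p10 : p`_1 = 0 by rewrite Dy p10 mul0r addr0.
apply: (fmorph_inj QnC); rewrite rmorph0.
case: (eqVneq (QnC p`_1) 0) => // nz; exfalso; move/negP: z_not_real; apply.
move: yr; rewrite Dy !rmorphD !rmorphM /= (Fr_real p0) (Fr_real p1) => /addrI /(mulfI nz).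
by move->.
Qed.

End RealSub.
Section Spectral.
Local Open Scope ring_scope.
Variable gT : finGroupType.
Local Notation G := [set: gT]%G.
Local Notation N := #|gT|.

Definition mxF (f : gT -> algC) : 'M[algC]_N :=
  \matrix_(i, j) f (vtx i * (vtx j)^-1)%g.

Definition conv (f g : gT -> algC) x := \sum_h f h * g (h^-1 * x)%g.

Lemma sum_vtx (F : gT -> algC) : \sum_(k < N) F (vtx k) = \sum_y F y.
Proof. by rewrite -(big_enum_val F). Qed.

Lemma mxF_mul f g : mxF f *m mxF g = mxF (conv f g).
Proof.
apply/matrixP => i j; rewrite !mxE.
rewrite (eq_bigr (fun k => f (vtx i * (vtx k)^-1)%g * g (vtx k * (vtx j)^-1)%g)); last first.
  by move=> k _; rewrite !mxE.
rewrite (sum_vtx (fun y => f (vtx i * y^-1)%g * g (y * (vtx j)^-1)%g)) /conv.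
rewrite (reindex_inj (inj_comp (mulIg (vtx i)) (@invg_inj gT))) /=.
by apply: eq_bigr => h _; rewrite invMg invgK mulKVg mulgA.
Qed.

Lemma conv_comm f g : (forall x y, f (x ^ y)%g = f x) -> conv f g =1 conv g f.
Proof.
move=> fJ x; rewrite /conv.
rewrite (reindex_inj (inj_comp (mulgI x) (@invg_inj gT))) /=.
apply: eq_bigr => k _; rewrite mulrC invMg invgK mulgKV; congr (_ * _).
by rewrite -(fJ _ k); congr f; rewrite /conjg mulgKV.
Qed.


Definition om (f : gT -> algC) (i : Iirr G) :=
  (\sum_x f x * ('chi[G]_i x)^*) / 'chi[G]_i 1%g.

Lemma sumG (F : gT -> algC) : \sum_(x in G) F x = \sum_x F x.
Proof. by apply: eq_bigl => x; rewrite inE. Qed.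

Lemma field_aux (a b c d : algC) : c != 0 -> d != 0 ->
  d^-1 * a * (d * (b / c)) = a / c * b.
Proof. by move=> c0 d0; field; rewrite c0 d0. Qed.

Lemma conv_chi f (fJ : forall x y, f (x ^ y)%g = f x) i x :
  conv f 'chi[G]_i x = om f i * 'chi[G]_i x.
Proof.
have fJ' : {in G &, forall x y, f (x ^ y)%g = f x} by move=> a b _ _; apply: fJ.
have fG : forall x, x \notin G -> f x = 0 by move=> a; rewrite inE.
have cfP : is_class_fun <<G>>%g [ffun x => f x] by rewrite genGid; apply: intro_class_fun.
pose phi : 'CF(G) := Cfun 0 cfP.
have phiE y : phi y = f y by rewrite cfunE.
have GO j : \sum_k 'chi[G]_i (k * x)%g * 'chi[G]_j (k^-1)%g
    = #|G|%:R * ((i == j)%:R * ('chi_i x / 'chi_i 1%g)).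
  by rewrite -(generalized_orthogonality_relation x i j) sumG mulVKf ?neq0CG.
rewrite /conv (reindex_inj (@invg_inj gT)) /=.
transitivity (\sum_k 'chi[G]_i (k * x)%g * phi (k^-1)%g).
  by apply: eq_bigr => k _; rewrite phiE invgK mulrC.
rewrite [phi]cfun_sum_cfdot.
transitivity (\sum_j '[phi, 'chi_j] * \sum_k 'chi[G]_i (k * x)%g * 'chi[G]_j (k^-1)%g).
  symmetry; under eq_bigr do rewrite mulr_sumr.
  rewrite exchange_big /=; apply: eq_bigr => k _.
  rewrite sum_cfunE mulr_sumr; apply: eq_bigr => j _.
  by rewrite cfunE mulrCA.
rewrite (bigD1 i) //= GO eqxx mul1r big1 => [|j nji]; last first.
  by rewrite GO eq_sym (negbTE nji) mul0r mulr0 mulr0.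
rewrite addr0 /om cfdotE sumG.
under eq_bigr do rewrite phiE.
have nG : #|G|%:R != 0 :> algC := neq0CG G.
have n1 := irr1_neq0 i.
by apply: field_aux.
Qed.


Definition eC (i : Iirr G) x := 'chi[G]_i 1%g * 'chi[G]_i x / N%:R.

Lemma mxF_ext f g : f =1 g -> mxF f = mxF g.
Proof. by move=> fg; apply/matrixP => i j; rewrite !mxE. Qed.

Lemma sum_eC : \sum_i mxF (eC i) = 1%:M.
Proof.
apply/matrixP => i j; rewrite summxE !mxE.
under eq_bigr do rewrite mxE.
have := second_orthogonality_relation (vtx i * (vtx j)^-1)%g (in_setT 1%g).
rewrite class1G inE -eq_mulgV1 (inj_eq enum_val_inj) => H.
rewrite /eC -mulr_suml.
rewrite (eq_bigr (fun k => 'chi[G]_k (vtx i * (vtx j)^-1)%g * ('chi[G]_k 1%g)^*)); last first.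
  by move=> k _; rewrite mulrC conj_Creal // Rreal_nat // Cnat_irr1.
rewrite H; case: eqP => [<-|_]; last by rewrite mul0r.
by rewrite mulgV cent11T setIT cardsT mulr1n mulfV // -cardsT (neq0CG [set: gT]%G).
Qed.


Lemma mxF_scale c f : mxF (fun x => c * f x) = c *: mxF f.
Proof. by apply/matrixP => i j; rewrite !mxE. Qed.

Lemma conv_scale f g c x : conv f (fun y => c * g y) x = c * conv f g x.
Proof. by rewrite /conv mulr_sumr; apply: eq_bigr => h _; rewrite mulrCA. Qed.

Lemma conv_eC f (fJ : forall x y, f (x ^ y)%g = f x) i x :
  conv f (eC i) x = om f i * eC i x.
Proof.
have eE : eC i =1 (fun y => ('chi[G]_i 1%g / N%:R) * 'chi[G]_i y).
  by move=> y; rewrite /eC mulrAC.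
rewrite /conv (eq_bigr (fun h => f h * (('chi[G]_i 1%g / N%:R) * 'chi[G]_i (h^-1 * x)%g))); last first.
  by move=> h _; rewrite eE.
rewrite -/(conv f (fun y => ('chi[G]_i 1%g / N%:R) * 'chi[G]_i y) x) conv_scale conv_chi //.
by rewrite eE mulrCA.
Qed.

Lemma eig_om f (fJ : forall x y, f (x ^ y)%g = f x) l :
  root (char_poly (mxF f)) l -> exists i, l = om f i.
Proof.
rewrite -eigenvalue_root_char => /eigenvalueP [v Hv v0].
have ME i : mxF f *m mxF (eC i) = om f i *: mxF (eC i).
  by rewrite mxF_mul -mxF_scale; apply: mxF_ext => x; apply: conv_eC.
have [i Hi] : exists i, v *m mxF (eC i) != 0.
  apply/existsP; apply: contraR v0 => /existsPn H.
  rewrite -[v]mulmx1 -sum_eC mulmx_sumr big1 // => i _.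
  by apply/eqP/negbNE; apply: H.
exists i; apply/eqP; rewrite -subr_eq0.
have e1 : l *: (v *m mxF (eC i)) = om f i *: (v *m mxF (eC i)).
  by rewrite scalemxAl -Hv -mulmxA ME scalemxAr.
have : (l - om f i) *: (v *m mxF (eC i)) = 0 by rewrite scalerBl e1 subrr.
by move/eqP; rewrite scaler_eq0 (negbTE Hi) orbF.
Qed.

End Spectral.

Section Img.
Local Open Scope ring_scope.
Variables (Qn : fieldExtType rat) (QnC : {rmorphism Qn -> algC}).
Definition img (c : algC) := exists a, QnC a = c.
Lemma imgD c1 c2 : img c1 -> img c2 -> img (c1 + c2).
Proof. by move=> [a <-] [b <-]; exists (a + b); rewrite rmorphD. Qed.
Lemma imgM c1 c2 : img c1 -> img c2 -> img (c1 * c2).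
Proof. by move=> [a <-] [b <-]; exists (a * b); rewrite rmorphM. Qed.
Lemma imgV c : img c -> img (c^-1).
Proof. by move=> [a <-]; exists (a^-1); rewrite fmorphV. Qed.
Lemma img_nat m : img m%:R.
Proof. by exists m%:R; rewrite rmorph_nat. Qed.
Lemma img_sum (I : Type) (r : seq I) (P : pred I) (G : I -> algC) :
  (forall i, P i -> img (G i)) -> img (\sum_(i <- r | P i) G i).
Proof.
move=> HG; apply: (big_ind img) => //; last exact: imgD.
exact: (img_nat 0).
Qed.
End Img.

Section OmProps.
Local Open Scope ring_scope.
Variable gT : finGroupType.
Local Notation G := [set: gT]%G.

Lemma om_real (f : gT -> algC) (fr : forall x, (f x)^* = f x)
  (fV : forall x, f (x^-1)%g = f x) i : (om f i)^* = om f i.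
Proof.
rewrite /om fmorph_div /= (conj_Creal (Rreal_nat (Cnat_irr1 i))); congr (_ / _).
rewrite rmorph_sum /=.
rewrite (reindex_inj (@invg_inj gT)) /=; apply: eq_bigr => x _.
by rewrite rmorphM /= conjCK fr fV irr_inv.
Qed.

Lemma om_img (Qn : fieldExtType rat) (QnC : {rmorphism Qn -> algC})
  (Hchi : forall i x, img QnC ('chi[G]_i x))
  (f : gT -> algC) (fn : forall x, exists m, f x = m%:R) i : img QnC (om f i).
Proof.
rewrite /om; apply: imgM; last exact/imgV/Hchi.
apply: img_sum => x _; apply: imgM.
  by have [m ->] := fn x; apply: img_nat.
by rewrite -irr_inv; apply: Hchi.
Qed.
End OmProps.
Section Cay.
Variables (gT : finGroupType) (S : {set gT}).
Hypotheses (Sinv : forall s, s \in S -> (s^-1)%g \in S) (Snorm : forall g : gT, (S :^ g)%g = S).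

Lemma adjM u w x : cay_adj S (u * x)%g (w * x)%g = cay_adj S u w.
Proof. by rewrite /cay_adj invMg mulgA mulgK. Qed.

Lemma adjJ u w y : cay_adj S (u ^ y)%g (w ^ y)%g = cay_adj S u w.
Proof. by rewrite /cay_adj -conjVg -conjMg -{1}(Snorm y) memJ_conjg. Qed.

Lemma adj_sym u w : cay_adj S u w = cay_adj S w u.
Proof.
suff H a b : cay_adj S a b -> cay_adj S b a by apply/idP/idP; apply: H.
by rewrite /cay_adj => /Sinv; rewrite invMg invgK.
Qed.

Lemma walkM k u v x : cay_walk S k (u * x)%g (v * x)%g = cay_walk S k u v.
Proof.
elim: k u => [|k IH] u /=; first by rewrite (inj_eq (mulIg x)).
apply/existsP/existsP => [[w /andP [a b]]|[w /andP [a b]]].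
  exists (w * x^-1)%g; rewrite -(adjM _ _ x) -(IH (w * x^-1)%g) mulgKV.
  by rewrite a b.
by exists (w * x)%g; rewrite adjM IH a b.
Qed.

Lemma walkJ k u v y : cay_walk S k (u ^ y)%g (v ^ y)%g = cay_walk S k u v.
Proof.
elim: k u => [|k IH] u /=; first by rewrite (inj_eq (@conjg_inj _ y)).
apply/existsP/existsP => [[w /andP [a b]]|[w /andP [a b]]].
  exists (w ^ y^-1)%g; rewrite -(adjJ _ _ y) -(IH (w ^ y^-1)%g) conjgKV.
  by rewrite a b.
by exists (w ^ y)%g; rewrite adjJ IH a b.
Qed.

Lemma walk_succ k u v :
  cay_walk S k.+1 u v = [exists w, cay_adj S u w && cay_walk S k w v].
Proof. by []. Qed.

Lemma walkS k u v :
  cay_walk S k.+1 u v = [exists w, cay_walk S k u w && cay_adj S w v].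
Proof.
elim: k u => [|k IH] u.
  apply/existsP/existsP => [[w /andP [a /eqP <-]]|[w /andP [/eqP <- b]]].
    by exists u; rewrite /= eqxx a.
  by exists v; rewrite /= b eqxx.
rewrite walk_succ.
apply/existsP/existsP => [[w /andP [a]]|[w' /andP []]].
  rewrite IH => /existsP [w' /andP [b c]].
  by exists w'; rewrite c andbT walk_succ; apply/existsP; exists w; rewrite a b.
rewrite walk_succ => /existsP [w /andP [a b]] c.
by exists w; rewrite a IH; apply/existsP; exists w'; rewrite b c.
Qed.

Lemma walk_sym k u v : cay_walk S k u v = cay_walk S k v u.
Proof.
suff H a b : cay_walk S k a b -> cay_walk S k b a by apply/idP/idP; apply: H.
elim: k a b => [|k IH] a b; first by rewrite /= eq_sym.
rewrite walk_succ => /existsP [w /andP [h1 h2]]; rewrite walkS; apply/existsP; exists w.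
by rewrite IH // adj_sym.
Qed.

Local Open Scope ring_scope.

Definition fA (x : gT) : algC := (x \in S)%:R.
Definition fD (x : gT) : algC := (cay_dist S x 1%g)%:R.

Lemma distM u v : cay_dist S u v = cay_dist S (u * v^-1)%g 1%g.
Proof.
by rewrite /cay_dist; apply: eq_find => k; rewrite -(walkM _ _ _ v^-1) mulgV.
Qed.

Lemma distJ x y : cay_dist S (x ^ y)%g 1%g = cay_dist S x 1%g.
Proof.
by rewrite /cay_dist; apply: eq_find => k; rewrite /= -{1}(conj1g y) walkJ.
Qed.

Lemma distV x : cay_dist S (x^-1)%g 1%g = cay_dist S x 1%g.
Proof.
rewrite /cay_dist; apply: eq_find => k.
by rewrite -(walkM _ _ _ x) mulVg mul1g walk_sym.
Qed.

Lemma fAJ x y : fA (x ^ y)%g = fA x.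
Proof. by rewrite /fA -{1}(Snorm y) memJ_conjg. Qed.

Lemma fDJ x y : fD (x ^ y)%g = fD x.
Proof. by rewrite /fD distJ. Qed.

Lemma fAV x : fA (x^-1)%g = fA x.
Proof.
rewrite /fA; congr (nat_of_bool _)%:R; apply/idP/idP => [/Sinv|/Sinv //].
by rewrite invgK.
Qed.

Lemma fDV x : fD (x^-1)%g = fD x.
Proof. by rewrite /fD distV. Qed.

End Cay.

Section Final.
Local Open Scope ring_scope.

Lemma eigs_root m (M : 'M[algC]_m) c : c \in eigs M -> root (char_poly M) c.
Proof.
rewrite /eigs; case: (closed_field_poly_normal _) => r /= Dr Hc.
rewrite Dr rootZ ?root_prod_XsubC //.
by rewrite (monicP (char_poly_monic M)) oner_neq0.
Qed.

Lemma adjmxE (gT : finGroupType) (S : {set gT}) : cay_adjmx S = mxF (fA S).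
Proof.
by apply/matrixP => i j; rewrite !mxE /fA /cay_adj; case: (_ \in S).
Qed.

Lemma distmxE (gT : finGroupType) (S : {set gT}) : cay_distmx S = mxF (fD S).
Proof. by apply/matrixP => i j; rewrite !mxE /fD distM. Qed.

End Final.

Theorem mainTheorem16 (gT : finGroupType) (S : {set gT}) :
  (3 <= #|gT|)%N ->
  (1%g \notin S) ->
  (forall s, s \in S -> (s^-1)%g \in S) ->
  (forall g : gT, (S :^ g)%g = S) ->
  cay_connected S ->
  (Deg S %| totient #|gT| %/ 2)%N /\ (DegD S %| totient #|gT| %/ 2)%N.
Proof.
move=> n3 _ Sinv Snorm _.
have [Qn galQn [QnC gQnC [w [prim_w genQn] Hchi]]] :=
  group_num_field_exists [set: gT]%G.
rewrite cardsT in prim_w.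
have dimF : (totient #|gT| %/ 2 = \dim (Fr w))%N.
  by rewrite (dim_Fr QnC n3 prim_w genQn) mulKn.
have Hchi' : forall i x, img QnC ('chi[[set: gT]%G]_i x)%R.
  move=> i x; have [a Ha] := Hchi _ _ _ (irr_char i) x (order_dvdG (in_setT x)).
  by exists a.
have key (f : gT -> algC) : (forall x y, f (x ^ y)%g = f x) ->
    (forall x, f (x^-1)%g = f x) -> (forall x, exists m, f x = m%:R)%R ->
    forall c, c \in eigs (mxF f) -> inF QnC (Fr w) c.
  move=> fJ fV fn c /eigs_root /(eig_om fJ) [i ->].
  have [y Hy] := om_img Hchi' fn i.
  exists y => //; apply: (@real_in_Fr _ QnC _ _ n3 prim_w genQn).
  rewrite Hy; apply: om_real => // x.
  by have [m ->] := fn x; rewrite conjC_nat.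
rewrite dimF; split.
  rewrite /Deg adjmxE; apply: deg_gen_dvd; apply: key.
  - exact: fAJ.
  - exact: fAV.
  - by move=> x; exists (x \in S).
rewrite /DegD distmxE; apply: deg_gen_dvd; apply: key.
- exact: fDJ.
- exact: fDV.
- by move=> x; exists (cay_dist S x 1%g).
Qed.
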